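(* For every shrub $P$ on a finite set $I$, the rational function $f_P$ is, when written as the displayed quotient of products of linear forms, in lowest terms, without repeated factors, and a product of linear factors (i.e. after cancellation nothing cancels: the linear forms appearing in numerator and denominator are pairwise distinct).
   Context: A shrub $P$ on a finite set $I$ is a set $E$ of edges (unordered pairs of distinct elements of $I$) with a height function $h_P:I\to\mathbb{N}$; $j$ covers $i$ if $\{i,j\}\in E$ and $h_P(j)=h_P(i)+1$. Axioms: (1) edges join vertices whose heights differ by $1$; (2) every vertex of positive height covers some vertex; (3) no four distinct $a,b,c,d$ with $a$ covering $b$ and $c$, $c$ covering $d$, $\{b,d\}\notin E$; (4) no five distinct $a,b,c,d,e$ with $a$ covering $c,d$, $b$ covering $d,e$, $\{a,e\}\notin E$, $\{b,c\}\notin E$. A vertex is ramified if it covers at least two distinct vertices; two ramified vertices are equivalent if they cover the same set of vertices. $\operatorname{Ram}(P)$ is the set of equivalence classes of ramified vertices; for $r\in\operatorname{Ram}(P)$, $r^-$ is the common set of vertices covered by the elements of $r$. For $S\subseteq I$, the upper ideal $\langle S\rangle_P$ generated by $S$ is the set of $j\in I$ such that every descending path $j=j_0,j_1,\dots,j_m$ (each $j_t$ covering $j_{t+1}$) ending at a vertex of height $0$ contains an element of $S$. For $J\subseteq I$ whose complement is a shrub (for the restricted edges and height), $P\setminus J$ denotes that restricted shrub; $P\setminus\langle r\rangle_P$ is such a shrub. Write $u[S]=\sum_{k\in S}u_k$. Define $$f_P=\frac{1}{\prod_{i\in I}u[\langle\{i\}\rangle_P]}\prod_{r\in\operatorname{Ram}(P)}\frac{u[\langle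 r^-\rangle_{P\setminus\langle r\rangle_P}]}{u[\langle r^-\rangle_P]}\in\mathbb{Q}(u_i:i\in I).$$ *)

(* Defs.v *)
From mathcomp Require Import all_boot.
From mathcomp Require Import boolp.
Set Implicit Arguments.
Unset Strict Implicit.
Unset Printing Implicit Defensive.

Section Shrubs.
Variable I : finType.

(* A shrub is described by an edge relation [e] (a symmetric irreflexive
   relation = set of unordered pairs of distinct elements) and a height
   function [h], restricted to a vertex set [D : {set I}].  Working
   relative to [D] lets us speak of the restricted shrub P \ J
   (take D := D :\: J, with the restricted edges and height). *)

Definition covers (D : {set I}) (e : rel I) (h : I -> nat) (j i : I) : bool :=
  [&& j \in D, i \in D, e i j & h j == (h i).+1].

Definition is_shrub (D : {set I}) (e : rel I) (h : I -> nat) : Prop :=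
  (forall i j, e i j = e j i) /\ (forall i, ~~ e i i) /\
  (forall i j, i \in D -> j \in D -> e i j -> h j = (h i).+1 \/ h i = (h j).+1) /\
  (* (2) *)
  (forall i, i \in D -> 0 < h i -> exists j, covers D e h i j) /\
  ~ (exists a b c d, uniq [:: a; b; c; d] /\ covers D e h a b /\
        covers D e h a c /\ covers D e h c d /\ ~~ e b d) /\
  ~ (exists a b c d x, uniq [:: a; b; c; d; x] /\ covers D e h a c /\
        covers D e h a d /\ covers D e h b d /\ covers D e h b x /\
        ~~ e a x /\ ~~ e b c).

Definition upper_ideal (D : {set I}) (e : rel I) (h : I -> nat) (S : {set I})
  : {set I} :=
  [set j in D | `[< forall p : seq I, path (covers D e h) j p ->
                      h (last j p) = 0 -> has (mem S) (j :: p) >]].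

Definition covered_set (D : {set I}) (e : rel I) (h : I -> nat) (v : I)
  : {set I} := [set i | covers D e h v i].

Definition ramified (D : {set I}) (e : rel I) (h : I -> nat) (v : I) : bool :=
  (v \in D) && [exists a, exists b, [&& a != b, covers D e h v a & covers D e h v b]].

Definition Ram (D : {set I}) (e : rel I) (h : I -> nat) : {set {set I}} :=
  [set [set w | ramified D e h w && (covered_set D e h w == covered_set D e h v)]
  | v in [set v | ramified D e h v]].

Definition rminus (D : {set I}) (e : rel I) (h : I -> nat) (r : {set I})
  : {set I} := [set i | [forall v in r, covers D e h v i]].

(* The sets S whose linear forms u[S] occur as factors in the displayed
   expression of f_P (P = shrub on D):
   denominator: u[<{i}>_P] (i in I), u[<r^->_P] (r in Ram P);
   numerator:   u[<r^->_{P \ <r>_P}] (r in Ram P). *)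
Definition factor_sets (D : {set I}) (e : rel I) (h : I -> nat) : seq {set I} :=
  [seq upper_ideal D e h [set i] | i <- enum D] ++
  [seq upper_ideal D e h (rminus D e h r) | r <- enum (Ram D e h)] ++
  [seq upper_ideal (D :\: upper_ideal D e h r) e h (rminus D e h r)
   | r <- enum (Ram D e h)].

End Shrubs.

(* Main.v *)
Require Import Defs.
From mathcomp Require Import all_boot.
From mathcomp Require Import boolp.

Set Implicit Arguments.
Unset Strict Implicit.
Unset Printing Implicit Defensive.

Section Helpers.
Variable I : finType.
Variable e : rel I.
Variable h : I -> nat.

Lemma path_lt (D : {set I}) x p : path (covers D e h) x p -> forall y, y \in p -> h y < h x.
Proof.
elim: p x => [//|z p IH] x /= /andP[cxz pz] y; rewrite inE => /orP[/eqP->|yp].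
- by move: cxz => /and4P[_ _ _ /eqP->].
- move: cxz => /and4P[_ _ _ /eqP ->]. by rewrite ltnS ltnW // (IH z pz y yp).
Qed.

Definition good (D : {set I}) :=
  forall i, i \in D -> 0 < h i -> exists j, covers D e h i j.

Lemma exists_path (D : {set I}) : good D -> forall x, x \in D ->
  exists p, path (covers D e h) x p /\ h (last x p) = 0.
Proof.
move=> gD x; have [n hn] := ubnP (h x); elim: n x hn => [|n IH] x hx xD.
  by rewrite ltn0 in hx.
case: (posnP (h x)) => [h0|hpos]; first by exists [::].
have [j cxj] := gD x xD hpos.
have jD : j \in D by case/and4P: cxj.
have hj : h j < n by move: cxj hx => /and4P[_ _ _ /eqP->]; rewrite ltnS.
have [p [pp lp]] := IH j hj jD.
by exists (j :: p); split => //=; rewrite cxj.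
Qed.

Lemma upperL (D : {set I}) (S : {set I}) x : good D -> x \in upper_ideal D e h S ->
  x \in S \/ exists2 s, s \in S & h s < h x.
Proof.
move=> gD; rewrite inE => /andP[xD /asboolP Hp].
have [p [pp lp]] := exists_path gD xD.
have := Hp p pp lp; rewrite /= => /orP[xS|/hasP[s sp sS]]; first by left.
by right; exists s => //; exact: path_lt pp s sp.
Qed.

Lemma sub_upper (D : {set I}) (S : {set I}) x : x \in D -> x \in S -> x \in upper_ideal D e h S.
Proof.
move=> xD xS; rewrite inE xD /=; apply/asboolP => p _ _ /=.
by rewrite xS.
Qed.

Lemma upper_sub (D : {set I}) (S : {set I}) x : x \in upper_ideal D e h S -> x \in D.
Proof. by rewrite inE => /andP[]. Qed.

Definition bot (X : {set I}) := [set x in X | [forall y in X, h x <= h y]].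

Lemma bot_upper (D : {set I}) (S : {set I}) : good D -> S \subset D ->
  {in S &, forall a b, h a = h b} -> bot (upper_ideal D e h S) = S.
Proof.
move=> gD SD Sh; apply/setP => x; rewrite inE; apply/andP/idP.
- case=> xU /forallP Hx; case: (upperL gD xU) => // -[s sS hs].
  have := Hx s; rewrite (sub_upper (subsetP SD s sS) sS) /= => hxs.
  by move: hs; rewrite ltnNge hxs.
- move=> xS; split; first exact: sub_upper (subsetP SD x xS) xS.
  apply/forallP => y; apply/implyP => yU.
  case: (upperL gD yU) => [yS|[s sS hs]]; first by rewrite (Sh x y xS yS).
  by rewrite (Sh x s xS sS) ltnW.
Qed.

Lemma good_diff (D : {set I}) (S : {set I}) : good D -> good (D :\: upper_ideal D e h S).
Proof.
move=> gD i; rewrite inE => /andP[iU iD] hpos.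
case: (boolP [exists j, covers (D :\: upper_ideal D e h S) e h i j]) =>
  [/existsP[j cj]|]; first by exists j.
rewrite negb_exists => /forallP Hn; exfalso; move/negP: (iU); apply.
rewrite inE iD /=; apply/asboolP => -[|j p] /=.
- by move=> _ h0; rewrite h0 in hpos.
- move=> /andP[cij pj] lj.
  have jU : j \in upper_ideal D e h S.
    apply/negPn/negP => jU; have := Hn j.
    move: cij => /and4P[_ jD eij hij].
    by rewrite /covers !in_setD iD jU jD iU eij hij.
  move: jU; rewrite inE => /andP[_ /asboolP Hj].
  have := Hj p pj lj; rewrite /= => /orP[->|->]; by rewrite !orbT.
Qed.

Definition cls D v := [set w | ramified D e h w &&
   (covered_set D e h w == covered_set D e h v)].

Lemma rminus_class (D : {set I}) v : ramified D e h v ->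
  rminus D e h (cls D v) = covered_set D e h v.
Proof.
move=> vR; apply/setP => i; rewrite !inE; apply/forallP/idP => [H|cvi w].
- by have := H v; rewrite inE vR eqxx.
- apply/implyP; rewrite inE => /andP[_ /eqP cw].
  have : i \in covered_set D e h w by rewrite cw inE.
  by rewrite inE.
Qed.

Lemma Ram_spec (D : {set I}) r : r \in Ram D e h -> exists v,
  [/\ ramified D e h v, v \in r & rminus D e h r = covered_set D e h v].
Proof.
case/imsetP => v; rewrite inE => vR ->; exists v; split => //.
- by rewrite inE vR eqxx.
- exact: rminus_class.
Qed.

Lemma Ram_inj (D : {set I}) r r' : r \in Ram D e h -> r' \in Ram D e h ->
  rminus D e h r = rminus D e h r' -> r = r'.
Proof.
case/imsetP => v; rewrite inE => vR ->; case/imsetP => v'; rewrite inE => vR' ->.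
rewrite !rminus_class // => E.
by apply/setP => w; rewrite !inE E.
Qed.


Lemma rm_cov (D : {set I}) r a w : a \in rminus D e h r -> w \in r -> covers D e h w a.
Proof. by rewrite inE => /forallP H wr; have := H w; rewrite wr. Qed.

Lemma rm_sub (D : {set I}) r : r \in Ram D e h -> rminus D e h r \subset D.
Proof.
move=> rR; have [v [_ vr _]] := Ram_spec rR.
by apply/subsetP => a ar; case/and4P: (rm_cov ar vr).
Qed.

Lemma rm_h (D : {set I}) r : r \in Ram D e h ->
  {in rminus D e h r &, forall a b, h a = h b}.
Proof.
move=> rR; have [v [_ vr _]] := Ram_spec rR => a b ar br.
case/and4P: (rm_cov ar vr) => _ _ _ /eqP ha.
case/and4P: (rm_cov br vr) => _ _ _ /eqP hb.
by apply/eqP; rewrite -eqSS -ha -hb.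
Qed.

Lemma rm_two (D : {set I}) r : r \in Ram D e h ->
  exists a b, [/\ a != b, a \in rminus D e h r & b \in rminus D e h r].
Proof.
move=> rR; have [v [vR vr E]] := Ram_spec rR.
move: vR => /andP[_ /existsP[a /existsP[b /and3P[ab ca cb]]]].
by exists a, b; rewrite E !inE.
Qed.

Lemma rm_disj (D : {set I}) r : good D -> r \in Ram D e h ->
  rminus D e h r \subset D :\: upper_ideal D e h r.
Proof.
move=> gD rR; apply/subsetP => a ar; rewrite in_setD (subsetP (rm_sub rR) a ar) andbT.
apply/negP => aU; case: (upperL gD aU) => [arr|[s sr hs]].
- case/and4P: (rm_cov ar arr) => _ _ _ /eqP ha.
  by move: ha => /eqP; rewrite eqn_leq ltnn andbF.
- case/and4P: (rm_cov ar sr) => _ _ _ /eqP hsa.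
  by move: hs; rewrite hsa ltnNge leqnSn.
Qed.

Lemma B_ne_C (D : {set I}) r : r \in Ram D e h ->
  upper_ideal D e h (rminus D e h r) !=
  upper_ideal (D :\: upper_ideal D e h r) e h (rminus D e h r).
Proof.
move=> rR; have [v [vR vr E]] := Ram_spec rR.
have vD : v \in D by case/andP: vR.
apply/negP => /eqP EU.
have vB : v \in upper_ideal D e h (rminus D e h r).
  rewrite inE vD /=; apply/asboolP => -[|y p] /=.
  - move=> _ h0; move: vR => /andP[_ /existsP[a /existsP[b /and3P[_ ca _]]]].
    by case/and4P: ca => _ _ _; rewrite h0.
  - move=> /andP[cvy _] _; apply/orP; right; apply/orP; left.
    by rewrite E inE.
move: vB; rewrite EU => /upper_sub; rewrite in_setD => /andP[/negP[]].
exact: sub_upper.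
Qed.

End Helpers.

Theorem mainTheorem11 (I : finType) (e : rel I) (h : I -> nat) :
  is_shrub [set: I] e h ->
  uniq (factor_sets [set: I] e h) /\ set0 \notin factor_sets [set: I] e h.
Proof.
case=> [_ [_ [_ [H2 _]]]].
have gD : good e h [set: I] by [].
set D := [set: I].
have botA : forall i, bot h (upper_ideal D e h [set i]) = [set i].
  move=> i; apply: bot_upper => //; first by apply/subsetP => x; rewrite inE.
  by move=> a b; rewrite !inE => /eqP-> /eqP->.
have botB : forall r, r \in Ram D e h ->
    bot h (upper_ideal D e h (rminus D e h r)) = rminus D e h r.
  by move=> r rR; apply: bot_upper => //; [exact: rm_sub | exact: rm_h].
have botC : forall r, r \in Ram D e h ->
    bot h (upper_ideal (D :\: upper_ideal D e h r) e h (rminus D e h r))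
    = rminus D e h r.
  move=> r rR; apply: bot_upper; [exact: good_diff | exact: rm_disj | exact: rm_h].
have notsing : forall r i, r \in Ram D e h -> rminus D e h r != [set i].
  move=> r i rR; have [a [b [ab ar br]]] := rm_two rR.
  apply/negP => /eqP E; move: ar br ab; rewrite E !inE => /eqP-> /eqP->.
  by rewrite eqxx.
have bot0 : bot h set0 = set0 by apply/setP => x; rewrite !inE.
split.
- rewrite /factor_sets !cat_uniq !has_cat !negb_or.
  apply/and5P; split.
  + rewrite map_inj_in_uniq ?enum_uniq // => i j _ _ E.
    by apply: set1_inj; rewrite -botA E botA.
  + apply/andP; split; apply/hasPn => X /mapP[r]; rewrite mem_enum => rR ->;
      apply/mapP => -[i _ E]; have := congr1 (bot h) E;
      rewrite ?botA ?botB ?botC // => E'; by move: (notsing r i rR); rewrite E' eqxx.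
  + rewrite map_inj_in_uniq ?enum_uniq // => r r'; rewrite !mem_enum => rR rR' E.
    by apply: (Ram_inj rR rR'); rewrite -botB // E botB.
  + apply/hasPn => X /mapP[r]; rewrite mem_enum => rR ->.
    apply/mapP => -[r']; rewrite mem_enum => rR' E.
    have E' := congr1 (bot h) E; rewrite botC // botB // in E'.
    have err := Ram_inj rR rR' E'; subst r'.
    by move: (B_ne_C rR); rewrite E eqxx.
  + rewrite map_inj_in_uniq ?enum_uniq // => r r'; rewrite !mem_enum => rR rR' E.
    by apply: (Ram_inj rR rR'); rewrite -botC // E botC.
- rewrite /factor_sets !mem_cat; apply/negP => /orP[|/orP[]] /mapP.
  + case=> i _ E; have := congr1 (bot h) E; rewrite botA bot0.
    by move=> /setP/(_ i); rewrite !inE eqxx.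
  + case=> r; rewrite mem_enum => rR E; have := congr1 (bot h) E.
    rewrite botB // bot0 => E'; have [a [b [_ ar _]]] := rm_two rR.
    by move: ar; rewrite -E' inE.
  + case=> r; rewrite mem_enum => rR E; have := congr1 (bot h) E.
    rewrite botC // bot0 => E'; have [a [b [_ ar _]]] := rm_two rR.
    by move: ar; rewrite -E' inE.
Qed.
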